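(* Let $L$ be a finite graded lattice of rank $n$ with an $S_n$ EL-labeling, and let $\mathfrak m$ be a maximal chain of $L$. Then distinct elements of $\mathcal{M}_{\mathfrak m}$ have distinct label permutations, and the set $\{\omega_{\mathfrak m'}:\mathfrak m'\in\mathcal{M}_{\mathfrak m}\}$ is exactly the set of permutations $\omega$ of $[n]$ with $\omega\le_R\omega_{\mathfrak m}$, each occurring for exactly one $\mathfrak m'\in\mathcal{M}_{\mathfrak m}$.
   Context: An $S_n$ EL-labeling of a finite graded poset with $\hat0,\hat1$ is an edge-labeling of covering pairs such that each interval has exactly one maximal chain with weakly increasing labels (bottom to top), lexicographically smallest among its maximal chains, and labels along each maximal chain $\mathfrak m$ form a permutation $\omega_{\mathfrak m}$ of $[n]$. For $i\in[n-1]$, $U_i(\mathfrak m)$ is the unique maximal chain agreeing with $\mathfrak m$ except possibly at rank $i$ whose label permutation has no descent at $i$. $\mathcal{M}_{\mathfrak m}$ is the set of all maximal chains $U_{i_1}U_{i_2}\cdots U_{i_r}(\mathfrak m)$ for all finite sequences $i_1,\dots,i_r$ in $[n-1]$ (including the empty one). For a permutation $v$ of $[n]$, $\mathrm{INV}(v)=\{(v(j),v(i)): i<j,\ v(i)>v(j)\}$; the (right) weak order is $v\le_R w$ iff $\mathrm{INV}(v)\subseteq\mathrm{INV}(w)$ (equivalently $v$ is obtained from $w$ by successively right-multiplying by adjacent transpositions $s_i$ each decreasing the number of inversions by one). *)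

(* Defs.v *)
From mathcomp Require Import all_boot all_order.
Set Implicit Arguments. Unset Strict Implicit. Unset Printing Implicit Defensive.
Import Order.TTheory.

Section Defs.
Variables (d : Order.disp_t) (T : finTBLatticeType d).

Definition covers (x y : T) : bool :=
  (x < y)%O && [forall z : T, ~~ ((x < z)%O && (z < y)%O)].

(* s is (the tail of) a maximal chain x = x0 ⋖ x1 ⋖ ... ⋖ y of the interval [x,y] *)
Definition ichain (x y : T) (s : seq T) : bool :=
  path covers x s && (last x s == y).

Definition maxchain (c : seq T) : bool :=
  if c is x :: s then (x == \bot%O) && ichain x \top%O s else false.

Definition graded_rank (n : nat) : Prop :=
  forall s : seq T, ichain \bot%O \top%O s -> size s = n.

Variable lab : T -> T -> nat.

Definition ilabels (x : T) (s : seq T) : seq nat := pairmap lab x s.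

Definition labels (c : seq T) : seq nat :=
  if c is x :: s then ilabels x s else [::].

End Defs.

Fixpoint lex_le (s t : seq nat) : bool :=
  match s, t with
  | [::], _ => true
  | _ :: _, [::] => false
  | a :: s', b :: t' => (a < b) || ((a == b) && lex_le s' t')
  end.

Definition is_perm_n (n : nat) (w : seq nat) : bool := perm_eq w (iota 1 n).

(* (w(j), w(i)) ∈ INV(w), positions 1-indexed as i < j with w(i) > w(j) *)
Definition INV (w : seq nat) (p : nat * nat) : Prop :=
  exists i j, [/\ i < j < size w, nth 0 w j < nth 0 w i & p = (nth 0 w j, nth 0 w i)].

Definition weak_le (v w : seq nat) : Prop := forall p, INV v p -> INV w p.

(* descent of w at position i (1-indexed): w(i) > w(i+1) *)
Definition descent_at (i : nat) (w : seq nat) : bool := nth 0 w i < nth 0 w i.-1.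

Section SnEL.
Variables (d : Order.disp_t) (T : finTBLatticeType d) (n : nat) (lab : T -> T -> nat).

Definition EL_labeling : Prop :=
  forall x y : T, (x <= y)%O ->
    exists s : seq T,
      [/\ ichain x y s, sorted leq (ilabels lab x s),
          (forall s', ichain x y s' -> sorted leq (ilabels lab x s') -> s' = s)
        & (forall s', ichain x y s' -> lex_le (ilabels lab x s) (ilabels lab x s'))].

Definition Sn_EL_labeling : Prop :=
  EL_labeling /\ forall c : seq T, maxchain c -> is_perm_n n (labels lab c).

(* U_i(m): the maximal chain agreeing with m except possibly at rank i whose
   label permutation has no descent at i (chosen by [pick]; it exists and is
   unique under the S_n EL hypothesis). *)
Definition U (i : nat) (c : (n.+1).-tuple T) : (n.+1).-tuple T :=
  odflt c [pick c' : (n.+1).-tuple T |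
             [&& maxchain c',
                 [forall j : 'I_n.+1, (val j != i) ==> (tnth c' j == tnth c j)]
               & ~~ descent_at i (labels lab c')]].

Definition inM (m c : (n.+1).-tuple T) : Prop :=
  exists s : seq nat, all (fun i => 0 < i < n) s /\ c = foldr U m s.

End SnEL.

(* Main.v *)
Require Import Defs.
From mathcomp Require Import all_boot all_order.
From mathcomp Require Import zify.
Set Implicit Arguments. Unset Strict Implicit. Unset Printing Implicit Defensive.
Import Order.TTheory.

Section Proof.
Variables (d : Order.disp_t) (T : finTBLatticeType d) (n : nat) (lab : T -> T -> nat).

Local Notation bot := (\bot%O : T).
Local Notation top := (\top%O : T).
Local Notation nt c k := (nth bot (c : seq T) k).

Lemma maxchainP (c : seq T) : size c = n.+1 ->
  maxchain c <-> [/\ nt c 0 = bot, nt c n = top & forall k, k < n -> covers (nt c k) (nt c k.+1)].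
Proof.
case: c => [//|x s] /= [Hs].
rewrite /ichain; split.
- case/andP => /eqP -> /andP [Hp /eqP Hl]; split => //.
  + by rewrite -Hs -(last_nth bot).
  + move=> k Hk; move/(pathP bot): Hp => /(_ k); rewrite Hs => /(_ Hk) //.
- case => H0 Hn Hc; apply/andP; split; first by apply/eqP.
  apply/andP; split.
  + apply/(pathP bot) => k; rewrite Hs => Hk. exact: (Hc k Hk).
  + by rewrite (last_nth bot) Hs Hn.
Qed.

Lemma labelsE (c : seq T) : size c = n.+1 -> size (labels lab c) = n /\
  forall k, k < n -> nth 0 (labels lab c) k = lab (nt c k) (nt c k.+1).
Proof.
case: c => [//|x s] /= [Hs]; rewrite /ilabels size_pairmap; split => // k Hk.
by rewrite (nth_pairmap bot) ?Hs.
Qed.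

Lemma chain_le (c : seq T) : size c = n.+1 -> maxchain c ->
  forall i j, i <= j <= n -> (nt c i <= nt c j)%O.
Proof.
move=> Hs /(maxchainP Hs) [_ _ Hc] i j /andP [Hij Hj].
elim: j Hij Hj => [|j IH] Hij Hj.
  by have -> : i = 0 by lia.
case: (ltnP i j.+1) => Hi.
  apply: le_trans (IH _ _) _; first lia; first lia.
  by have /andP [/ltW] := Hc j Hj.
by have -> : i = j.+1 by lia.
Qed.

Definition seg (c : seq T) p q := mkseq (fun k => nt c (p + k.+1)) (q - p).

Lemma seg_ichain (c : seq T) p q : size c = n.+1 -> maxchain c -> p < q <= n ->
  ichain (nt c p) (nt c q) (seg c p q).
Proof.
move=> Hs /(maxchainP Hs) [_ _ Hc] Hpq; apply/andP; split.
  apply/(pathP bot) => k; rewrite size_mkseq => Hk.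
  rewrite nth_mkseq //; case: k Hk => [|k] Hk /=.
    by rewrite addn1; apply: Hc; lia.
  rewrite nth_mkseq; last lia.
  have -> : p + k.+2 = (p + k.+1).+1 by lia.
  apply: Hc; lia.
rewrite (last_nth bot) size_mkseq.
have -> : q - p = (q - p - 1).+1 by lia.
rewrite /= nth_mkseq; last lia.
by have -> : p + (q - p - 1).+1 = q by lia.
Qed.

Lemma seg_labels (c : seq T) p q k : size c = n.+1 -> p < q <= n -> k < q - p ->
  nth 0 (ilabels lab (nt c p) (seg c p q)) k = nth 0 (labels lab c) (p + k).
Proof.
move=> Hs Hpq Hk; rewrite /ilabels (nth_pairmap bot) ?size_mkseq //.
have [_ ->] := labelsE Hs; last lia.
rewrite nth_mkseq //; case: k Hk => [|k] Hk /=; first by rewrite addn0 addn1.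
by rewrite nth_mkseq; [congr lab; congr nth; lia | lia].
Qed.

Definition sortedI (c : seq T) p q := forall k, p <= k -> k.+1 < q ->
  nth 0 (labels lab c) k <= nth 0 (labels lab c) k.+1.

Lemma seg_sorted (c : seq T) p q : size c = n.+1 -> p < q <= n -> sortedI c p q ->
  sorted leq (ilabels lab (nt c p) (seg c p q)).
Proof.
move=> Hs Hpq HI; apply/(sortedP 0) => k.
rewrite /ilabels size_pairmap size_mkseq => Hk.
rewrite -/(ilabels _ _ _) !seg_labels //; try lia.
rewrite addnS; apply: HI; lia.
Qed.


Hypothesis Hgr : graded_rank T n.
Hypothesis HEL : Sn_EL_labeling n lab.

Lemma interval_uniq (c1 c2 : seq T) p q : size c1 = n.+1 -> size c2 = n.+1 ->
  maxchain c1 -> maxchain c2 -> p < q <= n -> nt c1 p = nt c2 p -> nt c1 q = nt c2 q ->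
  sortedI c1 p q -> sortedI c2 p q -> forall k, p <= k <= q -> nt c1 k = nt c2 k.
Proof.
move=> S1 S2 M1 M2 Hpq Ep Eq I1 I2 k Hk.
have Hle : (nt c1 p <= nt c1 q)%O by apply: chain_le => //; lia.
have [s [_ _ Hu _]] := HEL.1 _ _ Hle.
have E1 := Hu _ (seg_ichain S1 M1 Hpq) (seg_sorted S1 Hpq I1).
have E2 : seg c2 p q = s.
  apply: Hu; rewrite ?Ep ?Eq; [exact: seg_ichain | exact: seg_sorted].
case: (posnP (k - p)) => Hkp; first by have -> : k = p by lia.
have := congr1 (fun s => nth bot s (k - p).-1) (etrans E1 (esym E2)).
rewrite /= !nth_mkseq; try lia.
by have -> : p + (k - p).-1.+1 = k by lia.
Qed.

Lemma last_take_c (tl : seq T) k : k <= size tl ->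
  last bot (take k tl) = nth bot (bot :: tl) k.
Proof.
move=> Hk; rewrite (last_nth bot) size_take.
have -> : (if k < size tl then k else size tl) = k by case: ltnP => //; lia.
case: k Hk => [|k] Hk //=; rewrite nth_take //.
Qed.

Lemma splice_size (c : seq T) p q s : size c = n.+1 -> maxchain c -> p < q <= n ->
  ichain (nt c p) (nt c q) s -> size s = q - p.
Proof.
case: c => [//|x tl] [Hs] /= /andP [/eqP -> /andP [Hp /eqP Hl]] Hpq /andP [Hsp /eqP Hsl].
have Ep := last_take_c (k := p) (tl := tl); have Eq := last_take_c (k := q) (tl := tl).
have := Hp; rewrite -{1}(cat_take_drop p tl) cat_path => /andP [Hp1 _].
move: Hp; rewrite -{1}(cat_take_drop q tl) cat_path => /andP [_ Hp2].
move: Hl; rewrite -{1}(cat_take_drop q tl) last_cat => Hl.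
rewrite Eq in Hp2 Hl; last lia.
have := Hgr (s := take p tl ++ s ++ drop q tl).
rewrite /ichain cat_path Hp1 Ep; last lia.
rewrite cat_path Hsp Hsl Hp2 !last_cat Ep; last lia.
rewrite Hsl Hl eqxx /= => /(_ isT).
rewrite !size_cat size_take size_drop; case: ltnP; lia.
Qed.


Definition tup := (n.+1).-tuple T.

Definition UP i (c c' : tup) :=
  [&& maxchain c', [forall j : 'I_n.+1, (val j != i) ==> (tnth c' j == tnth c j)]
    & ~~ descent_at i (labels lab c')].

Lemma agreeP i (c c' : tup) :
  reflect (forall k, k != i -> nt c' k = nt c k)
          [forall j : 'I_n.+1, (val j != i) ==> (tnth c' j == tnth c j)].
Proof.
apply: (iffP forallP) => H.
  move=> k Hk; case: (ltnP k n.+1) => Hkn.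
    by have := H (Ordinal Hkn); rewrite /= Hk /= !(tnth_nth bot) => /eqP.
  by rewrite !nth_default ?size_tuple.
by move=> j; apply/implyP => Hj; rewrite !(tnth_nth bot) H.
Qed.

Lemma tup_eq (c1 c2 : tup) : (forall k, nt c1 k = nt c2 k) -> c1 = c2.
Proof.
move=> H; apply: val_inj; apply: (eq_from_nth (x0 := bot)); first by rewrite !size_tuple.
by move=> k _; apply: H.
Qed.

Lemma tsize (c : tup) : size c = n.+1.
Proof. exact: size_tuple. Qed.

Lemma U_exists (c : tup) i : maxchain c -> 0 < i < n -> exists c', UP i c c'.
Proof.
move=> Mc Hi.
have Sc := tsize c.
have [_ _ Hcov] := (maxchainP Sc).1 Mc.
have Hle : (nt c i.-1 <= nt c i.+1)%O by apply: chain_le => //; lia.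
have [s [Hs Hsort _ _]] := HEL.1 _ _ Hle.
have Hsz : size s = 2.
  by rewrite (splice_size Sc Mc _ Hs); lia.
case: s Hs Hsort Hsz => [|y [|z [|]]] //= Hs Hsort _.
move: Hs; rewrite /ichain /= => /andP [/andP [Hxy /andP [Hyz _]] /eqP Hz].

subst z.
pose f k := if k == i then y else nt c k.
have Sf : size (mkseq f n.+1) == n.+1 by rewrite size_mkseq.
exists (Tuple Sf).
have Ef : forall k, k < n.+1 -> nt (Tuple Sf) k = f k by move=> k Hk; rewrite /= nth_mkseq.
apply/and3P; split.
- apply/(maxchainP (size_tuple _)); split.
  + by rewrite Ef // /f; case: ifP => [/eqP|]; [lia | have [] := (maxchainP Sc).1 Mc].
  + by rewrite Ef // /f; case: ifP => [/eqP|]; [lia | have [] := (maxchainP Sc).1 Mc].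
  + move=> k Hk; rewrite !Ef; try lia.
    rewrite /f; case: (eqVneq k i) => [->|Hki].
      by case: eqP => [|_]; [lia | exact: Hyz].
    case: (eqVneq k.+1 i) => [Hk1|_]; last exact: Hcov.
    by have -> : k = i.-1 by lia.
- apply/agreeP => k Hk; case: (ltnP k n.+1) => Hkn.
    by rewrite Ef // /f (negbTE Hk).
  by rewrite !nth_default ?size_tuple ?size_mkseq.
- have [_ HL] := labelsE (size_tuple (Tuple Sf)).
  rewrite /descent_at !HL; try lia.
  rewrite -ltnNge !Ef; try lia.
  rewrite /f eqxx ifF; last by apply/eqP; lia.
  have -> : i.-1.+1 = i by lia.
  rewrite eqxx ifF; last by apply/eqP; lia.
  by move: Hsort => /andP [].
Qed.


Lemma UP_uniq (c c1 c2 : tup) i : maxchain c -> 0 < i < n -> UP i c c1 -> UP i c c2 -> c1 = c2.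
Proof.
move=> Mc Hi /and3P [M1 /agreeP A1 D1] /and3P [M2 /agreeP A2 D2].
apply: tup_eq => k; case: (eqVneq k i) => [->|Hk]; last by rewrite A1 // A2.
have Hsi : forall c' : tup, ~~ descent_at i (labels lab c') -> sortedI c' i.-1 i.+1.
  move=> c' D k' H1 H2; have -> : k' = i.-1 by lia.
  by move: D; rewrite /descent_at -leqNgt; have -> : i.-1.+1 = i by lia.
apply: (interval_uniq (tsize _) (tsize _) M1 M2 (p := i.-1) (q := i.+1)); try lia.
- by rewrite A1 ?A2 //; apply/eqP; lia.
- by rewrite A1 ?A2 //; apply/eqP; lia.
- exact: Hsi.
- exact: Hsi.
Qed.

Lemma U_spec (c : tup) i : maxchain c -> 0 < i < n -> UP i c (U lab i c).
Proof.
move=> Mc Hi; rewrite /U; case: pickP => [x Hx | Hn] //=.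
by have [c' Hc'] := U_exists Mc Hi; have := Hn c'; rewrite /UP in Hc' *; rewrite Hc'.
Qed.

Lemma U_char (c c' : tup) i : maxchain c -> 0 < i < n -> UP i c c' -> U lab i c = c'.
Proof. by move=> Mc Hi H; apply: (UP_uniq Mc Hi (U_spec Mc Hi) H). Qed.

Lemma U_noop (c : tup) i : maxchain c -> 0 < i < n -> ~~ descent_at i (labels lab c) ->
  U lab i c = c.
Proof.
move=> Mc Hi D; apply: U_char => //; apply/and3P; split => //.
by apply/agreeP.
Qed.

Lemma U_mc (c : tup) i : maxchain c -> 0 < i < n -> maxchain (U lab i c).
Proof. by move=> Mc Hi; case/and3P: (U_spec Mc Hi). Qed.

Lemma U_agree (c : tup) i k : maxchain c -> 0 < i < n -> k != i -> nt (U lab i c) k = nt c k.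
Proof. by move=> Mc Hi Hk; case/and3P: (U_spec Mc Hi) => _ /agreeP H _; apply: H. Qed.


Lemma labels_perm (c : seq T) : maxchain c -> is_perm_n n (labels lab c).
Proof. by move=> Mc; apply: HEL.2. Qed.

Lemma perm2 (p q a b : nat) : perm_eq [:: p; q] [:: a; b] -> p <= q -> b < a -> p = b /\ q = a.
Proof.
move=> H Hpq Hba.
have Hp : p \in [:: a; b] by rewrite -(perm_mem H) mem_head.
have Hq : q \in [:: a; b] by rewrite -(perm_mem H) !inE eqxx orbT.
have U2 : uniq [:: p; q] by rewrite (perm_uniq H) /= inE; apply/eqP; lia.
move: Hp Hq U2 Hpq Hba; rewrite !inE /= andbT => /orP [] /eqP -> /orP [] /eqP ->; rewrite ?inE ?eqxx //; lia.
Qed.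

Lemma split3 (s : seq nat) i : 0 < i -> i < size s ->
  s = take i.-1 s ++ [:: nth 0 s i.-1, nth 0 s i & drop i.+1 s].
Proof.
move=> H0 Hi; rewrite -{1}(cat_take_drop i.-1 s); congr (_ ++ _).
rewrite (drop_nth 0); last lia.
have -> : i.-1.+1 = i by lia.
by rewrite (drop_nth 0).
Qed.

Definition tau i k := if k == i.-1 then i else if k == i then i.-1 else k.
Definition sw i (w : seq nat) := mkseq (fun k => nth 0 w (tau i k)) (size w).

Lemma U_lab (c : tup) i : maxchain c -> 0 < i < n -> descent_at i (labels lab c) ->
  labels lab (U lab i c) = sw i (labels lab c).
Proof.
move=> Mc Hi D.
have Mc' := U_mc Mc Hi.
have [S1 L1] := labelsE (tsize c); have [S2 L2] := labelsE (tsize (U lab i c)).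
set w := labels lab c in D S1 L1 *; set w' := labels lab (U lab i c) in S2 L2 *.
have Eo : forall k, k < n -> k != i.-1 -> k != i -> nth 0 w' k = nth 0 w k.
  move=> k Hk H1 H2; rewrite L1 // L2 // !U_agree //; apply/eqP; lia.
have Pw : perm_eq w' w.
  by apply: (perm_trans (labels_perm Mc')); rewrite perm_sym; apply: labels_perm.
have Ht : take i.-1 w' = take i.-1 w.
  apply: (eq_from_nth (x0 := 0)); first by rewrite !size_take S1 S2.
  have Hs : size (take i.-1 w') = i.-1 by rewrite size_takel // S2; lia.
  move=> k; rewrite Hs => Hk; rewrite !nth_take //.
  apply: Eo; try (apply/eqP); lia.
have Hd : drop i.+1 w' = drop i.+1 w.
  apply: (eq_from_nth (x0 := 0)); first by rewrite !size_drop S1 S2.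
  move=> k; rewrite size_drop S2 => Hk; rewrite !nth_drop.
  apply: Eo; try (apply/eqP); lia.
have E1 : w' = _ := split3 (s := w') (i := i) ltac:(lia) ltac:(lia).
have E2 : w = _ := split3 (s := w) (i := i) ltac:(lia) ltac:(lia).
move: Pw; rewrite {1}E1 {1}E2 Ht Hd perm_cat2l -(cat1s (nth 0 w' i)) -(cat1s (nth 0 w i)).
rewrite -!cat_cons perm_cat2r => P2.
have ND : nth 0 w' i.-1 <= nth 0 w' i.
  by case/and3P: (U_spec Mc Hi) => _ _; rewrite /descent_at -leqNgt.
have [Ha Hb] := perm2 P2 ND D.
apply: (eq_from_nth (x0 := 0)); first by rewrite size_mkseq S1 S2.
move=> k; rewrite S2 => Hk; rewrite nth_mkseq ?S1 // /tau.
case: (eqVneq k i.-1) => [->|H1] //.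
case: (eqVneq k i) => [->|H2] //.
exact: Eo.
Qed.


Lemma nodesc_sorted (c : seq T) i : 0 < i -> ~~ descent_at i (labels lab c) -> sortedI c i.-1 i.+1.
Proof.
move=> H0 D k' H1 H2; have -> : k' = i.-1 by lia.
by move: D; rewrite /descent_at -leqNgt; have -> : i.-1.+1 = i by lia.
Qed.

Lemma desc_transfer (c1 c2 : seq T) i : size c1 = n.+1 -> size c2 = n.+1 -> 0 < i < n ->
  nt c1 i.-1 = nt c2 i.-1 -> nt c1 i = nt c2 i -> nt c1 i.+1 = nt c2 i.+1 ->
  descent_at i (labels lab c1) = descent_at i (labels lab c2).
Proof.
move=> S1 S2 Hi E1 E2 E3.
have [_ L1] := labelsE S1; have [_ L2] := labelsE S2.
rewrite /descent_at !L1 ?L2; try lia.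
have -> : i.-1.+1 = i by lia.
by rewrite E1 E2 E3.
Qed.

Lemma U_at (c1 c2 : tup) j : maxchain c1 -> maxchain c2 -> 0 < j < n ->
  nt c1 j.-1 = nt c2 j.-1 -> nt c1 j.+1 = nt c2 j.+1 -> nt (U lab j c1) j = nt (U lab j c2) j.
Proof.
move=> M1 M2 Hj E1 E2.
case/and3P: (U_spec M1 Hj) => N1 _ D1; case/and3P: (U_spec M2 Hj) => N2 _ D2.
apply: (interval_uniq (tsize _) (tsize _) N1 N2 (p := j.-1) (q := j.+1)); try lia.
- by rewrite !U_agree //; apply/eqP; lia.
- by rewrite !U_agree //; apply/eqP; lia.
- by apply: (nodesc_sorted _ D1); lia.
- by apply: (nodesc_sorted _ D2); lia.
Qed.

Lemma U_comm (c : tup) i j : maxchain c -> 0 < i < n -> 0 < j < n -> i.+2 <= j ->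
  U lab j (U lab i c) = U lab i (U lab j c).
Proof.
move=> Mc Hi Hj Hij.
have Mi := U_mc Mc Hi; have Mj := U_mc Mc Hj.
symmetry; apply: U_char => //.
apply/and3P; split; first exact: U_mc.
- apply/agreeP => k Hk; case: (eqVneq k j) => [->|Hkj].
    by apply: U_at => //; rewrite !U_agree //; apply/eqP; lia.
  by rewrite !U_agree.
- case/and3P: (U_spec Mc Hi) => _ _ D.
  by rewrite (desc_transfer (tsize _) (tsize (U lab i c))) // U_agree //; apply/eqP; lia.
Qed.

Lemma tauL i : 0 < i -> tau i i.-1 = i.
Proof. by rewrite /tau eqxx. Qed.
Lemma tauR i : tau i i = i.-1.
Proof. by rewrite /tau eqxx; case: eqP. Qed.
Lemma tauO i k : k != i.-1 -> k != i -> tau i k = k.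
Proof. by rewrite /tau => /negbTE -> /negbTE ->. Qed.
Lemma nth_sw i w k : k < size w -> nth 0 (sw i w) k = nth 0 w (tau i k).
Proof. by move=> Hk; rewrite nth_mkseq. Qed.
Lemma size_sw i w : size (sw i w) = size w.
Proof. exact: size_mkseq. Qed.


Lemma braid_desc (w : seq nat) i : size w = n -> 0 < i -> i.+1 < n ->
  nth 0 w i < nth 0 w i.-1 -> nth 0 w i.+1 < nth 0 w i ->
  [/\ descent_at i.+1 (sw i w), descent_at i (sw i.+1 (sw i w)),
      descent_at i (sw i.+1 w), descent_at i.+1 (sw i (sw i.+1 w)) &
      [/\ nth 0 (sw i (sw i.+1 (sw i w))) i.-1 <= nth 0 (sw i (sw i.+1 (sw i w))) i,
          nth 0 (sw i (sw i.+1 (sw i w))) i <= nth 0 (sw i (sw i.+1 (sw i w))) i.+1,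
          nth 0 (sw i.+1 (sw i (sw i.+1 w))) i.-1 <= nth 0 (sw i.+1 (sw i (sw i.+1 w))) i &
          nth 0 (sw i.+1 (sw i (sw i.+1 w))) i <= nth 0 (sw i.+1 (sw i (sw i.+1 w))) i.+1]].
Proof.
move=> S Hi0 Hin D1 D2.
have t1 : tau i i.-1 = i := tauL Hi0.
have t2 : tau i i = i.-1 := tauR i.
have t3 : tau i i.+1 = i.+1 by apply: tauO; lia.
have t4 : tau i.+1 i = i.+1 := tauL (ltn0Sn i).
have t5 : tau i.+1 i.+1 = i := tauR i.+1.
have t6 : tau i.+1 i.-1 = i.-1 by apply: tauO; lia.
have t7 : tau i i.+1.-1 = i.-1 := tauR i.
have t8 : tau i.+1 i.+1.-1 = i.+1 := t4.
rewrite /descent_at.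
do 40? (rewrite ?t1 ?t2 ?t3 ?t4 ?t5 ?t6 ?t7 ?t8; rewrite nth_sw; last by rewrite ?size_sw S; lia).
rewrite ?t1 ?t2 ?t3 ?t4 ?t5 ?t6 ?t7 ?t8.
split; try split; lia.
Qed.

Lemma U_braid (c : tup) i : maxchain c -> 0 < i -> i.+1 < n ->
  descent_at i (labels lab c) -> descent_at i.+1 (labels lab c) ->
  U lab i (U lab i.+1 (U lab i c)) = U lab i.+1 (U lab i (U lab i.+1 c)).
Proof.
move=> Mc Hi0 Hin D1 D2.
have Hi : 0 < i < n by lia.
have Hi1 : 0 < i.+1 < n by lia.
have [S _] := labelsE (tsize c).
have [E2 E3 F2 F3 [G1 G2 G3 G4]] := braid_desc S Hi0 Hin D1 D2.
have M1 := U_mc Mc Hi; have L1 := U_lab Mc Hi D1.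
rewrite -L1 in E2.
have M2 := U_mc M1 Hi1; have L2 := U_lab M1 Hi1 E2.
rewrite -L1 -L2 in E3.
have M3 := U_mc M2 Hi; have L3 := U_lab M2 Hi E3.
have N1 := U_mc Mc Hi1; have K1 := U_lab Mc Hi1 D2.
rewrite -K1 in F2.
have N2 := U_mc N1 Hi; have K2 := U_lab N1 Hi F2.
rewrite -K1 -K2 in F3.
have N3 := U_mc N2 Hi1; have K3 := U_lab N2 Hi1 F3.
rewrite -L1 -L2 -L3 in G1 G2; rewrite -K1 -K2 -K3 in G3 G4.
have AL : forall k, k != i -> k != i.+1 -> nt (U lab i (U lab i.+1 (U lab i c))) k = nt c k.
  by move=> k H1 H2; rewrite U_agree // U_agree // U_agree.
have AR : forall k, k != i -> k != i.+1 -> nt (U lab i.+1 (U lab i (U lab i.+1 c))) k = nt c k.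
  by move=> k H1 H2; rewrite U_agree // U_agree // U_agree.
apply: tup_eq => k.
case: (boolP ((k == i) || (k == i.+1))) => Hk; last first.
  by rewrite AL ?AR //; apply: contra Hk => ->; rewrite ?orbT.
have Ei : i.-1.+1 = i by clear -Hi0; lia.
apply: (interval_uniq (tsize _) (tsize _) M3 N3 (p := i.-1) (q := i.+2)); last 1 first.
- by clear -Hk Hi0 Hin; case/orP: Hk => /eqP ->; lia.
- by clear -Hi0 Hin; lia.
- by rewrite AL ?AR //; clear -Hi0; lia.
- by rewrite AL ?AR //; clear -Hi0; lia.
- move=> k' H1 H2.
  case: (eqVneq k' i.-1) => [->|Hk']; first by rewrite Ei.
  by have -> : k' = i by clear -H1 H2 Hk'; lia.
- move=> k' H1 H2.
  case: (eqVneq k' i.-1) => [->|Hk']; first by rewrite Ei.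
  by have -> : k' = i by clear -H1 H2 Hk'; lia.
Qed.


Lemma perm_props w : is_perm_n n w -> [/\ size w = n, uniq w & forall x, (x \in w) = (0 < x <= n)].
Proof.
move=> P; split.
- by rewrite (perm_size P) size_iota.
- by rewrite (perm_uniq P) iota_uniq.
- by move=> x; rewrite (perm_mem P) mem_iota; lia.
Qed.

Lemma tau_lt i a b : 0 < i -> a < b -> ~~ ((a == i.-1) && (b == i)) -> tau i a < tau i b.
Proof.
move=> H0 Hab Hn; rewrite /tau.
case: (eqVneq a i.-1) => Ha; case: (eqVneq b i.-1) => Hb; case: (eqVneq a i) => Ha'; case: (eqVneq b i) => Hb';
  move: Hn; rewrite ?Ha ?Hb ?Ha' ?Hb' ?eqxx /=; lia.
Qed.

Lemma tau_inv i k : 0 < i -> tau i (tau i k) = k.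
Proof.
move=> H0.
case: (eqVneq k i.-1) => [->|H1]; first by rewrite tauL // tauR.
case: (eqVneq k i) => [->|H2]; first by rewrite tauR tauL.
by rewrite !tauO.
Qed.

Lemma tau_size i k s : 0 < i < s -> (tau i k < s) = (k < s).
Proof.
move=> H.
case: (eqVneq k i.-1) => [->|H1]; first by rewrite tauL; lia.
case: (eqVneq k i) => [->|H2]; first by rewrite tauR; lia.
by rewrite !tauO.
Qed.

Lemma INV_sw_sub i w p : 0 < i < size w -> descent_at i w -> INV (sw i w) p -> INV w p.
Proof.
move=> Hi D [a [b [/andP [Hab Hb] Hv ->]]].
move: Hb Hv; rewrite size_sw => Hb; rewrite !nth_sw //; last lia.
case: (boolP ((a == i.-1) && (b == i))) => [/andP [/eqP Ha /eqP Hb'] | Hn].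
  by move: D; rewrite /descent_at Ha Hb' tauR tauL; lia.
move=> Hv; exists (tau i a), (tau i b); split => //.
by rewrite tau_lt //= ?tau_size; lia.
Qed.

Lemma INV_sw_keep i w p : 0 < i < size w -> INV w p -> p <> (nth 0 w i, nth 0 w i.-1) ->
  INV (sw i w) p.
Proof.
move=> Hi [a [b [/andP [Hab Hb] Hv ->]]] Hp.
case: (boolP ((a == i.-1) && (b == i))) => [/andP [/eqP Ha /eqP Hb'] | Hn].
  by subst a b.
have H0 : 0 < i by lia.
have Hl : tau i a < tau i b by apply: tau_lt.
have Hs : tau i b < size w by rewrite tau_size.
have Ha : tau i a < size w by rewrite tau_size //; lia.
exists (tau i a), (tau i b); rewrite !nth_sw ?tau_inv // Hl size_sw Hs; by split.
Qed.

Lemma INV_desc i w : 0 < i < size w -> descent_at i w -> INV w (nth 0 w i, nth 0 w i.-1).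
Proof. by move=> Hi D; exists i.-1, i; split => //; apply/andP; split; lia. Qed.

Lemma INV_sw_not i w : 0 < i < size w -> uniq (sw i w) -> ~ INV (sw i w) (nth 0 w i, nth 0 w i.-1).
Proof.
move=> Hi U [a [b [/andP [Hab Hb] Hv [E1 E2]]]].
move: Hb; rewrite size_sw => Hb.
have Ea : nth 0 (sw i w) a = nth 0 (sw i w) i by rewrite -E2 nth_sw ?tauR; lia.
have Eb : nth 0 (sw i w) b = nth 0 (sw i w) i.-1 by rewrite -E1 nth_sw ?tauL; lia.
move/eqP: Ea; rewrite nth_uniq ?size_sw //; try lia.
move/eqP: Eb; rewrite nth_uniq ?size_sw //; lia.
Qed.


Definition invb (w : seq nat) (p : nat * nat) :=
  [exists a : 'I_(size w), exists b : 'I_(size w),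
     [&& a < b, nth 0 w b < nth 0 w a & p == (nth 0 w b, nth 0 w a)]].

Lemma INVP w p : reflect (INV w p) (invb w p).
Proof.
apply: (iffP existsP) => [[a /existsP [b /and3P [H1 H2 /eqP H3]]] | [i [j [/andP [Hij Hj] H2 H3]]]].
  by exists a, b; split => //; apply/andP; split.
have Hi : i < size w by lia.
exists (Ordinal Hi); apply/existsP; exists (Ordinal Hj); apply/and3P; split => //.
exact/eqP.
Qed.

Definition meas w := #|[pred q : 'I_n.+1 * 'I_n.+1 | invb w (val q.1, val q.2)]|.

Lemma meas_le v w : (forall p, INV v p -> INV w p) -> meas v <= meas w.
Proof.
move=> HS; apply: subset_leq_card; apply/subsetP => q; rewrite !inE => /INVP H.
exact/INVP/HS.
Qed.

Lemma meas_lt v w a b : (forall p, INV v p -> INV w p) -> INV w (a, b) -> ~ INV v (a, b) ->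
  a <= n -> b <= n -> meas v < meas w.
Proof.
move=> HS Hw Hv Ha Hb; apply: proper_card; apply/properP; split.
  apply/subsetP => q; rewrite !inE => /INVP H; exact/INVP/HS.
have Ha' : a < n.+1 by lia.
have Hb' : b < n.+1 by lia.
exists (Ordinal Ha', Ordinal Hb'); rewrite !inE /=; first exact/INVP.
by apply/negP => /INVP.
Qed.

Lemma nth_inj (s : seq nat) a b : uniq s -> a < size s -> b < size s -> nth 0 s a = nth 0 s b -> a = b.
Proof. by move=> U Ha Hb /eqP; rewrite nth_uniq // => /eqP. Qed.

Lemma find_desc v w : is_perm_n n v -> is_perm_n n w -> (forall p, INV v p -> INV w p) -> v <> w ->
  exists i, [/\ 0 < i < n, descent_at i w & ~ INV v (nth 0 w i, nth 0 w i.-1)].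
Proof.
move=> Pv Pw Hsub Hne.
have [Sv Uv Mv] := perm_props Pv; have [Sw Uw Mw] := perm_props Pw.
have Ex : exists k, (k < n) && (nth 0 v k != nth 0 w k).
  case/boolP: [exists k : 'I_n, nth 0 v k != nth 0 w k] => [/existsP [k Hk]| /existsPn H].
    by exists k; rewrite Hk ltn_ord.
  exfalso; apply: Hne; apply: (eq_from_nth (x0 := 0)); first by rewrite Sv Sw.
  by move=> k; rewrite Sv => Hk; have := H (Ordinal Hk); rewrite negbK => /eqP.
case: (ex_minnP Ex) => p /andP [Hp Hpd] Hmin.
have Emin : forall k, k < p -> nth 0 v k = nth 0 w k.
  move=> k Hk; case E: (nth 0 v k != nth 0 w k).
    by have := Hmin k; rewrite E andbT => /(_ (ltn_trans Hk Hp)); lia.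
  by apply/eqP; rewrite -[_ == _]negbK E.
set x := nth 0 v p.
have Hxw : x \in w by rewrite Mw -Mv mem_nth // Sv.
set q := index x w.
have Hq : q < n by rewrite -Sw index_mem.
have Ewq : nth 0 w q = x := nth_index 0 Hxw.
have Hqp : p < q.
  case: (ltngtP p q) => // H.
    have := Emin q H; rewrite Ewq => /(nth_inj Uv); rewrite Sv => /(_ Hq Hp); lia.
  by move: Hpd; rewrite -/x H Ewq eqxx.
set y := nth 0 w q.-1.
have Hyv : y \in v by rewrite Mv -Mw mem_nth // Sw; lia.
set k := index y v.
have Hk : k < n by rewrite -Sv index_mem.
have Evk : nth 0 v k = y := nth_index 0 Hyv.
have Hkp : p < k.
  case: (ltngtP k p) => // H.
    have E := Emin k H; rewrite Evk /y in E.
    have := nth_inj Uw (a := q.-1) (b := k) ltac:(rewrite Sw; lia) ltac:(rewrite Sw; lia) E.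
    lia.
  have E : nth 0 w q = nth 0 w q.-1 by rewrite Ewq /x -H Evk.
  have := nth_inj Uw (a := q) (b := q.-1) ltac:(rewrite Sw; lia) ltac:(rewrite Sw; lia) E.
  lia.
have Hxy : x < y.
  case: (ltngtP x y) => // H.
    have : INV v (y, x) by exists p, k; split => //; [apply/andP; split; lia | by rewrite Evk | by rewrite Evk].
    move=> /Hsub [a [b [/andP [Hab Hb] _ [E1 E2]]]].
    have Ha : a = q by apply: (nth_inj Uw); rewrite ?Sw; lia.
    have Hb' : b = q.-1 by apply: (nth_inj Uw); rewrite ?Sw; lia.
    lia.
  have E : nth 0 w q = nth 0 w q.-1 by rewrite Ewq H.
  have := nth_inj Uw (a := q) (b := q.-1) ltac:(rewrite Sw; lia) ltac:(rewrite Sw; lia) E.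
  lia.
exists q; split; first lia.
  by rewrite /descent_at Ewq.
move=> [a [b [/andP [Hab Hb] _ [E1 E2]]]].
have Ha : b = p by apply: (nth_inj Uv); rewrite ?Sv; lia.
have Hb' : a = k by apply: (nth_inj Uv); rewrite ?Sv; lia.
lia.
Qed.


Lemma braid_vals (w : seq nat) i : size w = n -> 0 < i -> i.+1 < n ->
  [/\ nth 0 (sw i w) i.+1 = nth 0 w i.+1, nth 0 (sw i w) i = nth 0 w i.-1,
      nth 0 (sw i.+1 (sw i w)) i = nth 0 w i.+1 & nth 0 (sw i.+1 (sw i w)) i.-1 = nth 0 w i].
Proof.
move=> S Hi0 Hin.
have t1 : tau i i.-1 = i := tauL Hi0.
have t2 : tau i i = i.-1 := tauR i.
have t3 : tau i i.+1 = i.+1 by apply: tauO; lia.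
have t4 : tau i.+1 i = i.+1 := tauL (ltn0Sn i).
have t5 : tau i.+1 i.+1 = i := tauR i.+1.
have t6 : tau i.+1 i.-1 = i.-1 by apply: tauO; lia.
do 40? (rewrite ?t1 ?t2 ?t3 ?t4 ?t5 ?t6; rewrite nth_sw; last by rewrite ?size_sw S; lia).
by rewrite ?t1 ?t2 ?t3 ?t4 ?t5 ?t6.
Qed.

Lemma comm_vals (w : seq nat) i j : size w = n -> 0 < i -> i.+2 <= j -> j < n ->
  nth 0 (sw i w) j = nth 0 w j /\ nth 0 (sw i w) j.-1 = nth 0 w j.-1.
Proof.
move=> S Hi Hij Hj; rewrite !nth_sw ?S; try lia.
by rewrite !tauO //; lia.
Qed.

Lemma inv_trans v a b c : uniq v -> a < b < c -> b \in v -> INV v (a, c) -> INV v (a, b) \/ INV v (b, c).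
Proof.
move=> U Habc Hb [i [j [/andP [Hij Hj] Hv [E1 E2]]]].
have Hk : index b v < size v by rewrite index_mem.
have Ek : nth 0 v (index b v) = b := nth_index 0 Hb.
case: (ltngtP (index b v) j) => H.
- left; exists (index b v), j; split => //; [apply/andP; split => // | by rewrite Ek -E1; lia | by rewrite Ek E1].
- right; exists i, (index b v); split => //; [apply/andP; split => //; lia | by rewrite Ek -E2; lia | by rewrite Ek E2].
- by move: Ek; rewrite H -E1; lia.
Qed.

Inductive reach (c : tup) : tup -> Prop :=
| reach0 : reach c c
| reachS i e : 0 < i < n -> reach (U lab i c) e -> reach c e.

Lemma reach_trans (a b c : tup) : reach a b -> reach b c -> reach a c.
Proof. by elim=> // {}a i e Hi _ IH /IH; apply: reachS. Qed.

Lemma reach1 (c : tup) i : 0 < i < n -> reach c (U lab i c).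
Proof. by move=> Hi; apply: (reachS Hi); apply: reach0. Qed.

Lemma reach_mc (c e : tup) : maxchain c -> reach c e -> maxchain e.
Proof. by move=> Mc H; elim: H Mc => // {}c i {}e Hi _ IH Mc; apply: IH; apply: U_mc. Qed.

Lemma lab_perm (c : tup) : maxchain c -> [/\ size (labels lab c) = n, uniq (labels lab c)
  & forall x, (x \in labels lab c) = (0 < x <= n)].
Proof. by move=> Mc; apply: perm_props; apply: labels_perm. Qed.

Lemma U_INV (c : tup) i p : maxchain c -> 0 < i < n ->
  INV (labels lab (U lab i c)) p -> INV (labels lab c) p.
Proof.
move=> Mc Hi; case: (boolP (descent_at i (labels lab c))) => D; last by rewrite U_noop.
have [S _ _] := lab_perm Mc.
by rewrite U_lab //; apply: INV_sw_sub; rewrite ?S.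
Qed.

Lemma U_dec (c : tup) i : maxchain c -> 0 < i < n -> descent_at i (labels lab c) ->
  meas (labels lab (U lab i c)) < meas (labels lab c).
Proof.
move=> Mc Hi D.
have [S U1 M1] := lab_perm Mc.
have [_ U2 _] := lab_perm (U_mc Mc Hi).
apply: (meas_lt (a := nth 0 (labels lab c) i) (b := nth 0 (labels lab c) i.-1)).
- by move=> p; apply: U_INV.
- by apply: INV_desc; rewrite ?S.
- by rewrite U_lab //; apply: INV_sw_not; rewrite ?S // -U_lab.
- by have := M1 (nth 0 (labels lab c) i); rewrite mem_nth ?S //; lia.
- by have := M1 (nth 0 (labels lab c) i.-1); rewrite mem_nth ?S //; lia.
Qed.

Lemma reach_INV (c e : tup) : maxchain c -> reach c e -> forall p, INV (labels lab e) p -> INV (labels lab c) p.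
Proof.
move=> Mc H; elim: H Mc => // {}c i {}e Hi _ IH Mc p Hp.
by apply: (U_INV Mc Hi); apply: IH => //; apply: U_mc.
Qed.

Lemma reach_dec (c e : tup) : maxchain c -> reach c e -> e = c \/ meas (labels lab e) < meas (labels lab c).
Proof.
move=> Mc H; elim: H Mc => [|{}c i {}e Hi _ IH] Mc; first by left.
case: (boolP (descent_at i (labels lab c))) => D; last by move: IH; rewrite U_noop //; apply.
have Hlt := U_dec Mc Hi D.
right; case: (IH (U_mc Mc Hi)) => [->|H] //; exact: ltn_trans H Hlt.
Qed.

Lemma reach_first (c e : tup) : maxchain c -> reach c e ->
  e = c \/ exists i, [/\ 0 < i < n, descent_at i (labels lab c) & reach (U lab i c) e].
Proof.
move=> Mc H; elim: H Mc => [|{}c i {}e Hi H IH] Mc; first by left.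
case: (boolP (descent_at i (labels lab c))) => D.
  by right; exists i.
by move: IH; rewrite U_noop //; apply.
Qed.


Lemma reach_exist (c : tup) v : maxchain c -> is_perm_n n v ->
  (forall p, INV v p -> INV (labels lab c) p) -> exists e, reach c e /\ labels lab e = v.
Proof.
move=> Mc Pv.
move Hm: (meas (labels lab c)) => m; elim/ltn_ind: m c Hm Mc => m IH c Hm Mc Hsub.
case: (eqVneq (labels lab c) v) => [E|Hne].
  by exists c; split => //; exact: reach0.
have [S _ _] := lab_perm Mc.
have [i [Hi D Hn]] := find_desc Pv (labels_perm Mc) Hsub (fun E => (negP Hne) (introT eqP (esym E))).
have Hlt := U_dec Mc Hi D.
have Hsub' : forall p, INV v p -> INV (labels lab (U lab i c)) p.
  by rewrite U_lab // => p Hp; apply: INV_sw_keep; [rewrite S | exact: Hsub | move=> E; apply: Hn; rewrite -E].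
have [e [He Ee]] := IH (meas (labels lab (U lab i c))) ltac:(by rewrite -Hm) (U lab i c) erefl (U_mc Mc Hi) Hsub'.
by exists e; split => //; exact: reachS Hi He.
Qed.


Lemma join_lt (c : tup) i j v : maxchain c -> 0 < i < n -> 0 < j < n -> i < j ->
  descent_at i (labels lab c) -> descent_at j (labels lab c) -> is_perm_n n v ->
  (forall p, INV v p -> INV (labels lab (U lab i c)) p) ->
  (forall p, INV v p -> INV (labels lab (U lab j c)) p) ->
  exists e, [/\ reach (U lab i c) e, reach (U lab j c) e & forall p, INV v p -> INV (labels lab e) p].
Proof.
move=> Mc Hi Hj Hij Di Dj Pv Hvi Hvj.
have Hi0 : 0 < i by lia.
have Hjn : j < n by lia.
have [S Uw Mw] := lab_perm Mc.
have [Sv Uv Mv] := perm_props Pv.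
have Li := U_lab Mc Hi Di; have Lj := U_lab Mc Hj Dj.
have Mi := U_mc Mc Hi; have Mj := U_mc Mc Hj.
have [Si Ui _] := lab_perm Mi; have [Sj Uj _] := lab_perm Mj.
have Hsi : 0 < i < size (labels lab c) by rewrite S.
have Hsj : 0 < j < size (labels lab c) by rewrite S.
have NPi : ~ INV v (nth 0 (labels lab c) i, nth 0 (labels lab c) i.-1).
  by move=> /Hvi; rewrite Li; apply: INV_sw_not => //; rewrite -Li.
have NPj : ~ INV v (nth 0 (labels lab c) j, nth 0 (labels lab c) j.-1).
  by move=> /Hvj; rewrite Lj; apply: INV_sw_not => //; rewrite -Lj.
case: (ltngtP j i.+1) => Hj1.
- by exfalso; move: Hij Hj1; clear; lia.
- exists (U lab j (U lab i c)); split.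
  + exact: reach1.
  + by rewrite U_comm //; exact: reach1.
  + have [E1 E2] := comm_vals S Hi0 Hj1 Hjn.
    have Dj' : descent_at j (labels lab (U lab i c)) by rewrite Li /descent_at E1 E2.
    have Hsj' : 0 < j < size (labels lab (U lab i c)) by rewrite Si.
    rewrite (U_lab Mi Hj Dj') => p Hp; apply: INV_sw_keep => //; first exact: Hvi.
    by rewrite Li E1 E2 => E; apply: NPj; rewrite -E.
- subst j.
  have Hin : i.+1 < n by [].
  have Hi1 : 0 < i.+1 < n by [].
  have [B1 B2 B3 B4] := braid_vals S Hi0 Hin.
  have [E2 E3 _ _ _] := braid_desc S Hi0 Hin Di Dj.
  rewrite -Li in E2 B1 B2; rewrite -Li in E3 B3 B4.
  have L2 := U_lab Mi Hi1 E2; have M2 := U_mc Mi Hi1.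
  rewrite -L2 in E3 B3 B4.
  have L3 := U_lab M2 Hi E3.
  have [S2 _ _] := lab_perm M2.
  exists (U lab i (U lab i.+1 (U lab i c))); split.
  + by apply: (reachS Hi1); exact: reach1.
  + by rewrite U_braid //; apply: (reachS Hi); exact: reach1.
  + have Hb : nth 0 (labels lab c) i \in v by rewrite Mv -Mw; apply: mem_nth; case/andP: Hsi.
    have NCA : ~ INV v (nth 0 (labels lab c) i.+1, nth 0 (labels lab c) i.-1).
      move: Di Dj; rewrite /descent_at /= => Di' Dj'.
      move=> /(inv_trans Uv _ Hb) [] //; first by apply/andP.
    move=> p Hp; rewrite L3; apply: INV_sw_keep; first by rewrite S2.
      rewrite L2; apply: INV_sw_keep; first by rewrite Si.
        exact: Hvi.
      by rewrite B1 B2 => E; apply: NCA; rewrite -E.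
    by rewrite B3 B4 => E; apply: NPj; rewrite -E.
Qed.


Lemma join (c : tup) i j v : maxchain c -> 0 < i < n -> 0 < j < n -> i != j ->
  descent_at i (labels lab c) -> descent_at j (labels lab c) -> is_perm_n n v ->
  (forall p, INV v p -> INV (labels lab (U lab i c)) p) ->
  (forall p, INV v p -> INV (labels lab (U lab j c)) p) ->
  exists e, [/\ reach (U lab i c) e, reach (U lab j c) e & forall p, INV v p -> INV (labels lab e) p].
Proof.
move=> Mc Hi Hj Hij Di Dj Pv Hvi Hvj.
case: (ltngtP i j) => H.
- exact: join_lt.
- by have [e [H1 H2 H3]] := join_lt Mc Hj Hi H Dj Di Pv Hvj Hvi; exists e.
- by rewrite H eqxx in Hij.
Qed.

Lemma reach_uniq (c : tup) e1 e2 : maxchain c -> reach c e1 -> reach c e2 ->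
  labels lab e1 = labels lab e2 -> e1 = e2.
Proof.
move Hm: (meas (labels lab c)) => m.
elim/ltn_ind: m c e1 e2 Hm => m IH c e1 e2 Hm Mc R1 R2 E.
have P1 := labels_perm (reach_mc Mc R1).
case: (reach_first Mc R1) => [H1|[i [Hi Di R1']]].
  subst e1; case: (reach_dec Mc R2) => [->|H] //.
  by rewrite -E ltnn in H.
case: (reach_first Mc R2) => [H2|[j [Hj Dj R2']]].
  subst e2; case: (reach_dec Mc R1) => [->|H] //.
  by rewrite E ltnn in H.
have Mi := U_mc Mc Hi; have Mj := U_mc Mc Hj.
have IHi : forall f1 f2, reach (U lab i c) f1 -> reach (U lab i c) f2 ->
    labels lab f1 = labels lab f2 -> f1 = f2.
  move=> f1 f2; apply: (IH (meas (labels lab (U lab i c))) _ (U lab i c) f1 f2 erefl Mi).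
  by rewrite -Hm; apply: U_dec.
have IHj : forall f1 f2, reach (U lab j c) f1 -> reach (U lab j c) f2 ->
    labels lab f1 = labels lab f2 -> f1 = f2.
  move=> f1 f2; apply: (IH (meas (labels lab (U lab j c))) _ (U lab j c) f1 f2 erefl Mj).
  by rewrite -Hm; apply: U_dec.
case: (eqVneq i j) => [Eij|Hij].
  by subst j; exact: IHi.
have Hvi := reach_INV Mi R1'.
have Hvj : forall p, INV (labels lab e1) p -> INV (labels lab (U lab j c)) p.
  by rewrite E; apply: reach_INV Mj R2'.
have [f [Fi Fj Fv]] := join Mc Hi Hj Hij Di Dj P1 Hvi Hvj.
have [g [Rg Eg]] := reach_exist (reach_mc Mi Fi) P1 Fv.
have -> : e1 = g by apply: IHi; [exact: R1' | exact: reach_trans Fi Rg | by rewrite Eg].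
by symmetry; apply: IHj; [exact: R2' | exact: reach_trans Fj Rg | by rewrite Eg E].
Qed.

Lemma inM_reach (m c : tup) : inM lab m c <-> reach m c.
Proof.
split.
  case=> s [Hall ->]; elim: s Hall => [|i s IH] /=; first by move=> _; exact: reach0.
  by case/andP => Hi /IH H; apply: reach_trans H (reach1 _ Hi).
elim=> [|c' i e Hi _ [s [Hall ->]]]; first by exists [::].
by exists (rcons s i); rewrite all_rcons Hi Hall foldr_rcons.
Qed.

Lemma main_sec (m : tup) (Hm : maxchain m) :
  (forall m1 m2, inM lab m m1 -> inM lab m m2 ->
     labels lab m1 = labels lab m2 -> m1 = m2) /\
  (forall w : seq nat,
     (is_perm_n n w /\ weak_le w (labels lab m)) <->
     (exists m', inM lab m m' /\ labels lab m' = w)) /\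
  (forall w : seq nat, is_perm_n n w -> weak_le w (labels lab m) ->
     exists! m', inM lab m m' /\ labels lab m' = w).
Proof.
split.
  by move=> m1 m2 /inM_reach R1 /inM_reach R2 E; exact: reach_uniq Hm R1 R2 E.
split.
  move=> w; split.
    case=> Pw Hw; have [e [Re Ee]] := reach_exist Hm Pw Hw.
    by exists e; split => //; exact/inM_reach.
  case=> m' [/inM_reach R <-]; split; first exact: labels_perm (reach_mc Hm R).
  exact: reach_INV Hm R.
move=> w Pw Hw; have [e [Re Ee]] := reach_exist Hm Pw Hw.
exists e; split; first by split => //; exact/inM_reach.
move=> e' [/inM_reach R' E'].
by apply: reach_uniq Hm Re R' _; rewrite Ee E'.
Qed.

End Proof.

Theorem mainTheorem6 (d : Order.disp_t) (T : finTBLatticeType d) (n : nat)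
  (lab : T -> T -> nat)
  (Hgr : graded_rank T n)
  (HEL : Sn_EL_labeling n lab)
  (m : (n.+1).-tuple T) (Hm : maxchain m) :
  (forall m1 m2, inM lab m m1 -> inM lab m m2 ->
     labels lab m1 = labels lab m2 -> m1 = m2) /\
  (forall w : seq nat,
     (is_perm_n n w /\ weak_le w (labels lab m)) <->
     (exists m', inM lab m m' /\ labels lab m' = w)) /\
  (forall w : seq nat, is_perm_n n w -> weak_le w (labels lab m) ->
     exists! m', inM lab m m' /\ labels lab m' = w).
Proof. exact: (main_sec Hgr HEL Hm). Qed.
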